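(* Let $\varphi=\frac{1+\sqrt5}{2}$ and write $[\varphi]_q=\sum_{k\geq0}\phi_kq^k$. Let $(a_n)_{n\geq0}$ be the generalized Catalan numbers, defined by $a_0=a_1=1$ and $$a_n=a_{n-1}+\sum_{k=1}^{n-2}a_ka_{n-2-k}\qquad(n\geq2).$$ These are the numbers $1,1,1,2,4,8,17,37,82,185,\ldots$; equivalently, their generating function $A(x)=\sum_n a_nx^n$ satisfies $A=1+xA+x^2A^2-x^2A$. Then $$\phi_k=(-1)^ka_{k-1}\qquad\text{for all }k\geq2,$$ and moreover $\phi_0=1$, $\phi_1=0$.
   Context: For an integer $a\geq1$ put $[a]_q=1+q+\cdots+q^{a-1}$ and $[a]_{q^{-1}}=1+q^{-1}+\cdots+q^{-(a-1)}$. Every rational number $r/s>1$ has a unique even-length regular continued fraction $r/s=[a_1,\ldots,a_{2m}]$ with $a_i\in\mathbb{Z}_{\geq1}$. Its $q$-deformation is the rational function $$\left[\tfrac{r}{s}\right]_q=[a_1]_q+\cfrac{q^{a_1}}{[a_2]_{q^{-1}}+\cfrac{q^{-a_2}}{[a_3]_q+\cfrac{q^{a_3}}{\ddots+\cfrac{q^{a_{2m-1}}}{[a_{2m}]_{q^{-1}}}}}}.$$ One also sets $[1]_q=1$. Each $[r/s]_q$ is identified with its Taylor expansion at $q=0$. For an irrational real number $x>1$ with continued fraction $x=[a_1,a_2,\ldots]$ and convergents $x_n=[a_1,\ldots,a_n]$, define $$[x]_q:=\sum_{k\geq0}\varkappa_kq^k,\qquad \varkappa_k=\lim_{n\to\infty}\bigl(\text{coefficient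 of }q^k\text{ in }[x_n]_q\bigr).$$ These limits exist and are eventually attained. Here $\varphi=[1,1,1,\ldots]$. *)

(* Defs.v *)
From HB Require Import structures.
From mathcomp Require Import all_boot all_order all_algebra.
Set Implicit Arguments. Unset Strict Implicit. Unset Printing Implicit Defensive.
Import Order.TTheory GRing.Theory Num.Theory.
Local Open Scope ring_scope.

Definition qint (a : nat) : {poly rat} := \sum_(i < a) 'X^i.

(* Evaluation of the q-continued fraction
     [a1]_q + q^a1 / ([a2]_{q^-1} + q^-a2 / ([a3]_q + ...  / [a_{2m}]_{q^-1}))
   as a pair (N, D) of polynomials with value N / D.  The boolean says whether
   the current entry is at an odd position (q-type) or even position (q^-1-type).
   Even-position steps are cleared of negative powers:
     [a]_{q^-1} = q^{-(a-1)} [a]_q,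
     [a]_{q^-1} + q^{-a} D/N = (q [a]_q N + D) / (q^a N). *)
Fixpoint qcf_aux (l : seq nat) (oddpos : bool) : {poly rat} * {poly rat} :=
  match l with
  | [::] => (0, 1)
  | a :: t =>
      match t with
      | [::] => if oddpos then (qint a, 1) else (qint a, 'X^(a.-1))
      | _ :: _ =>
          let p := qcf_aux t (~~ oddpos) in
          if oddpos then (qint a * p.1 + 'X^a * p.2, p.1)
          else ('X * qint a * p.1 + p.2, 'X^a * p.1)
      end
  end.

(* The even-length regular continued fraction of [a_1,...,a_n]:
   [..., b, 1] = [..., b+1]   and   [..., a] = [..., a-1, 1]. *)
Definition even_cf (l : seq nat) : seq nat :=
  if ~~ odd (size l) then l else
  match rev l with
  | 1%N :: b :: r => rev (b.+1 :: r)
  | a :: r => rev (1%N :: a.-1 :: r)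
  | [::] => [::]
  end.

(* [x]_q as a rational function N/D, for x = [a_1,...,a_n] (all a_i >= 1);
   the convention [1]_q = 1 is used for x = 1. *)
Definition qrat_cf (l : seq nat) : {poly rat} * {poly rat} :=
  if l == [:: 1%N] then (1, 1) else qcf_aux (even_cf l) true.

(* Power series coefficients c_0..c_k of N / D when D(0) <> 0:
   c_k = (N_k - sum_{1<=j<=k} D_j c_{k-j}) / D_0. *)
Fixpoint psc (N D : {poly rat}) (k : nat) : seq rat :=
  match k with
  | 0 => [:: N`_0 / D`_0]
  | k'.+1 =>
      let s := psc N D k' in
      rcons s ((N`_k'.+1 - \sum_(1 <= j < k'.+2) D`_j * nth 0 s (k'.+1 - j)) / D`_0)
  end.

(* Write D = q^m D' with D'(0) <> 0. *)
Definition lowdeg (D : {poly rat}) : nat := find (fun c => c != 0) D.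
Definition unshift (D : {poly rat}) : {poly rat} := Poly (drop (lowdeg D) D).

Definition taylor_coef (N D : {poly rat}) (k : nat) : rat :=
  nth 0 (psc N (unshift D) (k + lowdeg D)) (k + lowdeg D).

(* Coefficient of q^k in [x_n]_q, where x_n = [a 0, ..., a (n-1)] is the n-th
   convergent of the continued fraction [a_1, a_2, ...] (with a_{i+1} = a i). *)
Definition conv_coef (a : nat -> nat) (n k : nat) : rat :=
  let p := qrat_cf (mkseq a n) in taylor_coef p.1 p.2 k.

Definition qcoef_limit (a : nat -> nat) (k : nat) (c : rat) : Prop :=
  exists N, forall n, (N <= n)%N -> conv_coef a n k = c.

Definition phi_cf : nat -> nat := fun _ => 1%N.

(* Main.v *)
Require Import Defs.
From HB Require Import structures.
From mathcomp Require Import all_boot all_order all_algebra.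
From mathcomp Require Import ring zify.
Import Order.TTheory GRing.Theory Num.Theory.
Local Open Scope ring_scope.

Definition step (v : {poly rat} * {poly rat}) : {poly rat} * {poly rat} :=
  (('X + 'X^2) * v.1 + v.2, 'X * v.1 + v.2).

Lemma qint1 : qint 1%N = 1.
Proof. by rewrite /qint big_ord1 expr0. Qed.
Lemma qint2 : qint 2%N = 1 + 'X.
Proof. by rewrite /qint big_ord_recr big_ord1 /= expr0 expr1. Qed.

Lemma qcf_cons2 x t : qcf_aux [:: 1%N, 1%N, x & t] true = step (qcf_aux (x :: t) true).
Proof.
rewrite /step; case: t => [|y t] /=; rewrite qint1 !expr1; congr pair; ring.
Qed.

Lemma qcf_even j : qcf_aux (nseq j.*2.+2 1%N) true = iter j step (1 + 'X, 1).
Proof.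
elim: j => [|j IH]; first by rewrite /= qint1 expr0 expr1 !mulr1 ?mul1r.
have -> : nseq j.+1.*2.+2 1%N = [:: 1%N, 1%N & nseq j.*2.+2 1%N] by [].
by rewrite qcf_cons2 IH.
Qed.

Lemma qcf_odd j : qcf_aux (rcons (nseq j.*2.+1 1%N) 2%N) true = iter j step (1 + 'X + 'X^2, 1 + 'X).
Proof.
elim: j => [|j IH]; first by rewrite /= qint1 qint2 mul1r expr1 -expr2.
have -> : rcons (nseq j.+1.*2.+1 1%N) 2%N = [:: 1%N, 1%N & rcons (nseq j.*2.+1 1%N) 2%N] by [].
by rewrite qcf_cons2 IH.
Qed.

Lemma map_phi n m : map phi_cf (iota m n) = nseq n 1%N.
Proof. by elim: n m => [|n IH] m //=; rewrite IH. Qed.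

Lemma mkseq_phi n : mkseq phi_cf n = nseq n 1%N.
Proof. exact: map_phi. Qed.

Lemma even_cf_even j : even_cf (nseq j.*2.+2 1%N) = nseq j.*2.+2 1%N.
Proof. by rewrite /even_cf size_nseq /= odd_double. Qed.

Lemma even_cf_odd j : even_cf (nseq j.*2.+3 1%N) = rcons (nseq j.*2.+1 1%N) 2%N.
Proof.
rewrite /even_cf size_nseq rev_nseq /= odd_double /=.
by rewrite rev_cons -[1%N :: nseq _ _]/(nseq j.*2.+1 1%N) rev_nseq.
Qed.

Lemma conv_even j k : conv_coef phi_cf j.*2.+2 k =
  let p := iter j step (1 + 'X, 1) in taylor_coef p.1 p.2 k.
Proof.
by rewrite /conv_coef mkseq_phi /qrat_cf even_cf_even qcf_even.
Qed.

Lemma conv_odd j k : conv_coef phi_cf j.*2.+3 k =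
  let p := iter j step (1 + 'X + 'X^2, 1 + 'X) in taylor_coef p.1 p.2 k.
Proof.
by rewrite /conv_coef mkseq_phi /qrat_cf even_cf_odd qcf_odd.
Qed.

Definition cc (a : nat -> nat) (k : nat) : rat :=
  match k with 0%N => 1 | 1%N => 0 | _ => (-1) ^+ k * (a k.-1)%:R end.

Lemma sgn2 m : (-1) ^+ m.+2 = (-1) ^+ m :> rat.
Proof. by rewrite !exprS mulrA mulrNN !mul1r. Qed.

Lemma core (a : nat -> nat) :
  a 0%N = 1%N -> a 1%N = 1%N ->
  (forall n, (2 <= n)%N ->
     a n = (a n.-1 + \sum_(1 <= k < n.-1) a k * a (n - 2 - k)%N)%N) ->
  forall m, cc a m.+2 = cc a m.+1 + cc a m - \sum_(j < m.+2) cc a j * cc a (m.+1 - j).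
Proof.
move=> a0 a1 rec [|[|m]].
- by rewrite !big_ord_recr big_ord0 /= a1 !expr2 /=; rewrite !mulN1r opprK; ring.
- by rewrite !big_ord_recr big_ord0 /= (rec 2%N) // a1 /= big_geq.
have hS : \sum_(0 <= j < m) cc a j.+2 * cc a (m.+3 - j.+2)
    = (-1) ^+ m.+1 * (\sum_(0 <= j < m) a j.+1 * a (m - j))%:R.
  rewrite natr_sum mulr_sumr; apply: eq_big_nat => j /andP[_ hj].
  have e1 : (m.+3 - j.+2 = (m - j.+1).+2)%N by lia.
  have e2 : ((m - j.+1).+1 = m - j)%N by lia.
  have e3 : (m.+1 = (j + (m - j.+1)).+2)%N by lia.
  rewrite e1 /= !sgn2 e2 e3 sgn2 exprD natrM; ring.
have hr := rec m.+3 isT.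
rewrite big_add1 /= big_nat_recr //= in hr.
have e4 : (m.+3 - 2 - m.+1 = 0)%N by lia.
rewrite e4 a0 muln1 in hr.
rewrite (eq_big_nat _ _ (F2 := fun k => (a k.+1 * a (m - k))%N)) in hr; last first.
  by move=> k /andP[_ hk]; congr (_ * a _)%N; lia.
rewrite -(big_mkord xpredT (fun j => cc a j * cc a (m.+3 - j))).
rewrite big_nat_recl // big_nat_recl // big_nat_recr // big_nat_recr //=.
rewrite hS subn0 subnn.
have e5 : (m.+3 - m.+2 = 1)%N by lia.
rewrite e5 /= hr natrD natrD !sgn2 !exprS.

ring.
Qed.

Definition lowzero (j : nat) (p : {poly rat}) := forall i, (i < j)%N -> p`_i = 0.

Lemma lowzeroD j p q : lowzero j p -> lowzero j q -> lowzero j (p + q).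
Proof. by move=> hp hq i hi; rewrite coefD hp // hq // addr0. Qed.

Lemma lowzeroN j p : lowzero j p -> lowzero j (- p).
Proof. by move=> hp i hi; rewrite coefN hp // oppr0. Qed.

Lemma lowzero_le j j' p : lowzero j p -> (j' <= j)%N -> lowzero j' p.
Proof. by move=> hp hj i hi; apply: hp; apply: leq_trans hj. Qed.

Lemma lowzeroX j p : lowzero j p -> lowzero j.+1 ('X * p).
Proof. by move=> hp [|i] hi; rewrite coefXM //= hp. Qed.

Lemma lowzeroM j l p q : lowzero j p -> lowzero l q -> lowzero (j + l) (p * q).
Proof.
move=> hp hq i hi; rewrite coefM big1 // => t _.
have [ht|ht] := ltnP t j; first by rewrite hp // mul0r.
rewrite hq ?mulr0 //; have := ltn_ord t; lia.
Qed.

Definition Cp a K : {poly rat} := \poly_(i < K) cc a i.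

Lemma coefC a K i : (i < K)%N -> (Cp a K)`_i = cc a i.
Proof. by rewrite coef_poly => ->. Qed.

Lemma G_low (a : nat -> nat) K :
  a 0%N = 1%N -> a 1%N = 1%N ->
  (forall n, (2 <= n)%N ->
     a n = (a n.-1 + \sum_(1 <= k < n.-1) a k * a (n - 2 - k)%N)%N) ->
  let C := Cp a K in
  lowzero K (C * 'X + C * 'X^2 - 'X * (C * C) + 1 - C).
Proof.
move=> a0 a1 rec C i hi.
rewrite !coefD !coefN coefMX coefMXn coefXM coef1.
case: i hi => [|[|m]] hi /=.
- by rewrite coefC //= subrr.
- rewrite coefM big_ord1 !coefC //=; try lia; try ring.
- rewrite coefM subn2 /= (eq_bigr (fun j : 'I_m.+2 => cc a j * cc a (m.+1 - j))); last first.
    move=> j _; rewrite !coefC //; have := ltn_ord j; lia.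
  rewrite !coefC //; try lia.
  rewrite (@core a a0 a1 rec m); ring.
Qed.

Lemma low1 a K : (0 < K)%N -> lowzero 1 (1 + 'X - Cp a K).
Proof.
move=> hK [|i] // _; rewrite !coefD coefN coefC // coef1 coefX /=; ring.
Qed.

Lemma err_iter (a : nat -> nat) K v :
  a 0%N = 1%N -> a 1%N = 1%N ->
  (forall n, (2 <= n)%N ->
     a n = (a n.-1 + \sum_(1 <= k < n.-1) a k * a (n - 2 - k)%N)%N) ->
  (1 < K)%N ->
  forall i, lowzero (minn i.*2 K) ((iter i step v).1 - Cp a K * (iter i step v).2).
Proof.
move=> a0 a1 rec hK; elim => [|i IH]; first by move=> t; rewrite min0n.
rewrite /= /step /=.
set N := (iter i step v).1; set D := (iter i step v).2; set C := Cp a K.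
have -> : ('X + 'X^2) * N + D - C * ('X * N + D) =
   'X * ((N - C * D) * (1 + 'X - C)) +
   D * (C * 'X + C * 'X^2 - 'X * (C * C) + 1 - C) by ring.
apply: lowzeroD.
  apply: (@lowzero_le (minn i.*2 K + 1).+1); last lia.
  by apply/lowzeroX/lowzeroM => //; apply: low1; lia.
apply: (@lowzero_le (0 + K)%N); last lia.
by apply: lowzeroM => //; apply: G_low.
Qed.

Lemma iter_D0 (v : {poly rat} * {poly rat}) i : v.2`_0 = 1 -> (iter i step v).2`_0 = 1.
Proof. by move=> h; elim: i => //= i IH; rewrite coefD coefXM /= add0r. Qed.

Lemma size_psc (N D : {poly rat}) k : size (psc N D k) = k.+1.
Proof. by elim: k => //= k IH; rewrite size_rcons IH. Qed.

Lemma psc_ok (N D : {poly rat}) (c : nat -> rat) K : D`_0 = 1 ->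
  (forall i, (i < K)%N -> N`_i = \sum_(j < i.+1) D`_j * c (i - j)%N) ->
  forall k, (k < K)%N -> forall i, (i <= k)%N -> nth 0 (psc N D k) i = c i.
Proof.
move=> hD hN; elim => [|k IH] hk i hi.
  move: hi; rewrite leqn0 => /eqP -> /=.
  by rewrite hD divr1 hN // big_ord1 hD mul1r.
rewrite /= nth_rcons size_psc.
case: ltnP => hik; first by apply: IH => //; lia.
have -> : i = k.+1 by lia.
rewrite eqxx hD divr1 hN //.
rewrite -(big_mkord xpredT (fun j => D`_j * c (k.+1 - j)%N)) big_ltn // hD mul1r subn0.
have -> : \sum_(1 <= j < k.+2) D`_j * (psc N D k)`_(k.+1 - j) =
    \sum_(1 <= j < k.+2) D`_j * c (k.+1 - j)%N.
  by apply: eq_big_nat => j /andP[hj1 hj2]; rewrite IH //; lia.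
by rewrite addrK.
Qed.

Lemma taylor_ok a K (N D : {poly rat}) k : D`_0 = 1 -> lowzero K (N - Cp a K * D) -> (k < K)%N ->
  taylor_coef N D k = cc a k.
Proof.
move=> hD hE hk.
have hl : lowdeg D = 0%N.
  rewrite /lowdeg; case: (polyseq D) hD => [|d s] /=; first by [].
  by move=> ->; rewrite oner_neq0.
rewrite /taylor_coef hl addn0 /unshift hl seq.drop0 polyseqK.
apply: (@psc_ok N D (cc a) K hD _ k hk) => // i hi.
have := hE i hi; rewrite coefB mulrC coefM => /eqP; rewrite subr_eq0 => /eqP ->.
by apply: eq_bigr => j _; rewrite coefC //; lia.
Qed.

Lemma main_conv (a : nat -> nat) :
  a 0%N = 1%N -> a 1%N = 1%N ->
  (forall n, (2 <= n)%N ->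
     a n = (a n.-1 + \sum_(1 <= k < n.-1) a k * a (n - 2 - k)%N)%N) ->
  forall k n, (k.*2.+4 <= n)%N -> conv_coef phi_cf n k = cc a k.
Proof.
move=> a0 a1 rec k n hn.
have hK : (1 < k.+2)%N by [].
have := odd_double_half (n - 2); set j := (n - 2)./2.
case: (odd (n - 2)) => /= e.
- have -> : n = j.*2.+3 by lia.
  rewrite conv_odd /=; apply: (@taylor_ok a k.+2) => //.
  + by apply: iter_D0; rewrite coefD coef1 coefX.
  + apply: (@lowzero_le (minn j.*2 k.+2)); first exact: err_iter.
    lia.
- have -> : n = j.*2.+2 by lia.
  rewrite conv_even /=; apply: (@taylor_ok a k.+2) => //.
  + by apply: iter_D0; rewrite coef1.
  + apply: (@lowzero_le (minn j.*2 k.+2)); first exact: err_iter.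
    lia.
Qed.

Theorem proposition4p1 (a : nat -> nat) :
  a 0%N = 1%N -> a 1%N = 1%N ->
  (forall n, (2 <= n)%N ->
     a n = (a n.-1 + \sum_(1 <= k < n.-1) a k * a (n - 2 - k)%N)%N) ->
  qcoef_limit phi_cf 0 1 /\ qcoef_limit phi_cf 1 0 /\
  (forall k, (2 <= k)%N ->
     qcoef_limit phi_cf k ((-1) ^+ k * (a k.-1)%:R)).
Proof.
move=> a0 a1 rec.
have H := @main_conv a a0 a1 rec.
split; [|split].
- by exists 4%N => n hn; rewrite (H 0%N n hn).
- by exists 6%N => n hn; rewrite (H 1%N n hn).
- case=> [|[|k]] // _; exists k.+2.*2.+4 => n hn; by rewrite (H k.+2 n hn).
Qed.
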